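(* Let $\mathbf{C}=\mathbf{C}_1\,\dot\cup\,\mathbf{C}_2$ and $\mathbf{B}=\mathbf{B}_+\,\dot\cup\,\mathbf{B}'\in\dot{\mathbb{P}}(\mathbb{L}(\mathbf{C}_1))$ with $|\mathbf{B}|=|\mathbf{C}_1|$, and suppose every $L\in\mathbf{B}_+$ has a positive monotonic effect on $D$ relative to $\mathbf{C}$. If for some tree $\mathfrak{T}$ on $\mathbf{B}_+$, some $\omega^*\in\Omega$ and some values $\mathbf{c}_2$ of $\mathbf{C}_2$, $$D_{\mathbf{B}=\mathbf{1},\mathbf{C}_2=\mathbf{c}_2}(\omega^* )-\sum_{L\in\mathbf{B}}D_{\mathbf{B}\setminus\{L\}=\mathbf{1},L=0,\mathbf{C}_2=\mathbf{c}_2}(\omega^* )+\sum_{\mathbf{E}\in\mathfrak{T}}D_{\mathbf{B}\setminus\mathbf{E}=\mathbf{1},\mathbf{E}=\mathbf{0},\mathbf{C}_2=\mathbf{c}_2}(\omega^* )>0,$$ then $\mathbf{B}$ is irreducible for $\mathcal{D}(\mathbf{C},\Omega)$.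
   Context: Events are binary random variables on a population $\Omega$; $\overline{X}=1-X$; $\mathbb{L}(\mathbf{C})=\mathbf{C}\cup\{\overline{X}:X\in\mathbf{C}\}$; $\dot{\mathbb{P}}(\mathbb{L}(\mathbf{C}))$ is the set of subsets of $\mathbb{L}(\mathbf{C})$ not containing both $X$ and $\overline{X}$; $(L)_{\mathbf{c}}$ is the value of literal $L$ under assignment $\mathbf{c}$; $\bigwedge(\mathbf{B})=\min_{L\in\mathbf{B}}L$. Potential outcomes $\mathcal{D}(\mathbf{C},\Omega)$: $D_{\mathbf{c}}(\omega)\in\{0,1\}$ for all $\omega$, $\mathbf{c}$. Since $|\mathbf{B}|=|\mathbf{C}_1|$, setting the literals of $\mathbf{B}$ determines an assignment to $\mathbf{C}_1$; e.g. $D_{\mathbf{B}\setminus\mathbf{E}=\mathbf{1},\mathbf{E}=\mathbf{0},\mathbf{C}_2=\mathbf{c}_2}$ sets the literals in $\mathbf{E}$ to 0, the other literals of $\mathbf{B}$ to 1 and $\mathbf{C}_2$ to $\mathbf{c}_2$. A literal $L\in\mathbb{L}(\mathbf{C})$ has a positive monotonic effect on $D$ relative to $\mathbf{C}$ if for all $\omega$ and all pairs of assignments $\mathbf{c},\mathbf{c}'$ differing only in the variable underlying $L$, with $(L)_{\mathbf{c}}=1$ and $(L)_{\mathbf{c}'}=0$, one has $D_{\mathbf{c}}(\omega)\ge D_{\mathbf{c}'}(\omega)$. A tree on a finite set $\mathbf{S}$ is a set $\mathfrak{T}$ of 2-element subsets (edges) of $\mathbf{S}$ with $|\mathfrak{T}|=|\mathbf{S}|-1$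 such that every two distinct elements of $\mathbf{S}$ are joined by a path of edges (when $|\mathbf{B}_+|\le1$ the tree is empty). A sufficient cause representation $(\mathbf{A},\mathfrak{B})$ for $\mathcal{D}(\mathbf{C},\Omega)$ is a tuple $\mathbf{A}=\langle A_1,\dots,A_p\rangle$ of binary random variables on $\Omega$ unaffected by interventions on $\mathbf{C}$ and $\mathfrak{B}=\langle\mathbf{B}_1,\dots,\mathbf{B}_p\rangle$, $\mathbf{B}_i\in\dot{\mathbb{P}}(\mathbb{L}(\mathbf{C}))$, with: $D_{\mathbf{c}}(\omega)=1$ iff some $j$ has $A_j(\omega)=1$ and $(\bigwedge(\mathbf{B}_j))_{\mathbf{c}}=1$. $\mathbf{B}$ is irreducible for $\mathcal{D}(\mathbf{C},\Omega)$ if in every such representation some $\mathbf{B}_i\supseteq\mathbf{B}$. *)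

(* Defs.v *)
From HB Require Import structures.
From mathcomp Require Import all_boot all_order all_algebra.
Set Implicit Arguments. Unset Strict Implicit. Unset Printing Implicit Defensive.
Import Order.TTheory GRing.Theory Num.Theory.

(* Variables (the set C) form a finite type V.  A literal is a pair (x, b):
   (x, true) is the event X, (x, false) is its complement 1 - X. *)
Definition literal (V : finType) := (V * bool)%type.

Definition lit_val (V : finType) (L : literal V) (c : {ffun V -> bool}) : bool :=
  if L.2 then c L.1 else ~~ c L.1.

(* membership in \dot{P}(L(C)): no X together with its complement *)
Definition consistent (V : finType) (B : {set literal V}) : Prop :=
  forall x : V, ~~ (((x, true) \in B) && ((x, false) \in B)).

(* (/\ B)_c = min_{L in B} (L)_c  (= 1 for empty B) *)
Definition conj_val (V : finType) (B : {set literal V}) (c : {ffun V -> bool}) : bool :=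
  [forall L in B, lit_val L c].

Definition outcomes (V : finType) (Omega : Type) := {ffun V -> bool} -> Omega -> bool.

Definition pos_monotonic (V : finType) (Omega : Type) (D : outcomes V Omega)
  (L : literal V) : Prop :=
  forall (w : Omega) (c c' : {ffun V -> bool}),
    (forall y, y != L.1 -> c y = c' y) ->
    lit_val L c -> ~~ lit_val L c' ->
    (D c' w <= D c w)%N.

(* sufficient cause representation (A, B) with p components; the A_j are
   functions of omega only, hence unaffected by interventions on C *)
Definition suff_cause_rep (V : finType) (Omega : Type) (D : outcomes V Omega)
  (p : nat) (A : 'I_p -> Omega -> bool) (Bs : 'I_p -> {set literal V}) : Prop :=
  (forall j, consistent (Bs j)) /\
  (forall (c : {ffun V -> bool}) (w : Omega),
     D c w = [exists j : 'I_p, A j w && conj_val (Bs j) c]).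

Definition irreducible (V : finType) (Omega : Type) (D : outcomes V Omega)
  (B : {set literal V}) : Prop :=
  forall (p : nat) (A : 'I_p -> Omega -> bool) (Bs : 'I_p -> {set literal V}),
    suff_cause_rep D A Bs -> exists i : 'I_p, B \subset Bs i.

(* The assignment  B \ E = 1, E = 0, C2 = c2 : variables of C1 get the value
   making their literal of B equal to 1 unless the literal lies in E (then 0);
   variables outside C1 (i.e. in C2) get the value c2. *)
Definition assign (V : finType) (C1 : {set V}) (B E : {set literal V})
  (c2 : {ffun V -> bool}) : {ffun V -> bool} :=
  [ffun x => if x \in C1 then
               (if (x, true) \in B then (x, true) \notin E else (x, false) \in E)
             else c2 x].

Definition is_tree (V : finType) (S : {set literal V}) (T : {set {set literal V}}) : Prop :=
  (forall E, E \in T -> (E \subset S) && (#|E| == 2)) /\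
  #|T| = (#|S| - 1)%N /\
  (forall x y, x \in S -> y \in S -> x != y ->
     connect (fun a b : literal V => [set a; b] \in T) x y).

Definition bZ (b : bool) : int := Posz (nat_of_bool b).

(* Main.v *)
Require Import Defs.
From HB Require Import structures.
From mathcomp Require Import all_boot all_order all_algebra.
From mathcomp Require Import zify.
Import Order.TTheory GRing.Theory Num.Theory.
Local Open Scope ring_scope.

Lemma sum_bZ (I : finType) (P : pred I) (F : I -> bool) :
  \sum_(i | P i) bZ (F i) = Posz (\sum_(i | P i) (F i : nat)).
Proof. by rewrite /bZ (big_morph Posz PoszD (erefl _)). Qed.

Lemma sumb_card (X : finType) (A : {set X}) (P : pred X) :
  (\sum_(i in A) (P i : nat) = #|[set i in A | P i]|)%N.
Proof.
rewrite -sum1_card [RHS]big_mkcond [LHS]big_mkcond /=.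
apply: eq_bigr => i _; rewrite inE; by case: (i \in A); case: (P i).
Qed.

Lemma cross (X : finType) (e : rel X) (W : {set X}) x y :
  connect e x y -> x \in W -> y \notin W ->
  exists a b, [/\ a \in W, b \notin W & e a b].
Proof.
move/connectP => [p Hp ->].
elim: p x Hp => [|z p IH] x /= Hp Hx Hy.
  by rewrite Hx in Hy.
move/andP: Hp => [exz Hp].
case Hz: (z \in W).
  exact: IH Hp Hz Hy.
by exists x, z; rewrite Hz.
Qed.

Lemma tree_bound (X : finType) (S U : {set X}) (T : {set {set X}}) :
  (forall E, E \in T -> (E \subset S) && (#|E| == 2)) ->
  #|T| = (#|S| - 1)%N ->
  (forall x y, x \in S -> y \in S -> x != y ->
     connect (fun a b : X => [set a; b] \in T) x y) ->
  U \subset S ->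
  (#|[set E in T | E \subset U]| <= #|U|.-1)%N.
Proof.
move=> HE HT Hc HUS.
case: (set_0Vmem U) => [U0|[x xU]].
  rewrite U0 cards0 /=; rewrite leqn0 cards_eq0; apply/eqP/setP => E.
  rewrite !inE; apply/negP => /andP [ET]; rewrite subset0 => /eqP E0.
  by move: (HE E ET); rewrite E0 cards0 andbF.
pose F (W : {set X}) := [set E in T | (E \subset W) && ~~ (E \subset U)].
have Hind : forall k, (k <= #|S| - #|U|)%N -> exists W : {set X},
    [/\ U \subset W, W \subset S, #|W| = (#|U| + k)%N & (k <= #|F W|)%N].
  elim=> [|k IH] Hk.
    by exists U; rewrite addn0.
  have [W [UW WS cW kF]] := IH (ltnW Hk).
  have UleS := subset_leq_card HUS.
  have : ~~ (S \subset W).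
    apply/negP => SW; have := subset_leq_card SW; rewrite cW; lia.
  case/subsetPn => y yS yW.
  have xW : x \in W by apply: (subsetP UW).
  have xy : x != y by apply/eqP => exy; rewrite exy (negbTE yW) in xW.
  have [a [b [aW bW abT]]] := @cross X _ W x y (Hc x y (subsetP HUS x xU) yS xy) xW yW.
  have bS : b \in S.
    by move: (HE _ abT) => /andP [/subsetP H _]; apply: H; rewrite !inE eqxx orbT.
  exists (b |: W); split.
  - by apply: subset_trans UW (subsetUr _ _).
  - by rewrite subUset sub1set bS WS.
  - by rewrite cardsU1 bW cW add1n addnS.
  have : F W \proper F (b |: W).
    apply/properP; split.
      apply/subsetP => E; rewrite !inE => /andP [-> /andP [EW ->]].
      by rewrite (subset_trans EW (subsetUr _ _)).
    exists [set a; b].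
      rewrite !inE abT /= subUset !sub1set !inE aW eqxx orbT /=.
      apply/negP => /subsetP H; move: (H b); rewrite !inE eqxx orbT => /(_ isT) bU.
      by rewrite (subsetP UW _ bU) in bW.
    rewrite !inE abT /=; apply/negP => /andP [/subsetP H _].
    by move: (H b); rewrite !inE eqxx orbT (negbTE bW) => /(_ isT).
  move/proper_card; exact: leq_ltn_trans kF.
have UleS := subset_leq_card HUS.
have [W [_ _ _ kF]] := Hind (#|S| - #|U|)%N (leqnn _).
have FT : (#|F W| <= #|[set E in T | ~~ (E \subset U)]|)%N.
  apply: subset_leq_card; apply/subsetP => E; rewrite !inE => /andP [-> /andP [_ ->]] //.
have Hsplit : (#|[set E in T | E \subset U]| + #|[set E in T | ~~ (E \subset U)]| = #|T|)%N.
  rewrite -(cardsID [set E : {set X} | E \subset U] T); congr (_ + _)%N.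
    by apply: eq_card => E; rewrite !inE.
  by apply: eq_card => E; rewrite !inE andbC.
have U1 : (0 < #|U|)%N by apply/card_gt0P; exists x.
have H1 := leq_trans kF FT; move: H1 Hsplit HT UleS U1.
move: (#|[set E in T | E \subset U]|) (#|[set E in T | ~~ (E \subset U)]|) #|T| #|S| #|U| => a b t s u.
lia.
Qed.

Lemma assign_lit (V : finType) (C1 : {set V}) (B E : {set literal V}) c2 L :
  consistent B -> (forall L, L \in B -> L.1 \in C1) -> L \in B ->
  lit_val L (assign C1 B E c2) = (L \notin E).
Proof.
case: L => x b HB HC HL.
have xC : x \in C1 := HC _ HL.
rewrite /lit_val /assign ffunE /= xC.
case: b HL => HL /=; first by rewrite HL.
have := HB x; rewrite HL andbT => /negbTE ->.
by [].
Qed.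

Lemma assign_ext (V : finType) (C1 : {set V}) (B E E' : {set literal V}) c2 x y :
  (forall M : literal V, M.1 != x -> (M \in E) = (M \in E')) -> y != x ->
  assign C1 B E c2 y = assign C1 B E' c2 y.
Proof.
move=> H hy; rewrite /assign !ffunE.
by rewrite (H (y, true)) // (H (y, false)).
Qed.

Lemma lit_val_ext (V : finType) (M : literal V) (c c' : {ffun V -> bool}) :
  c M.1 = c' M.1 -> lit_val M c = lit_val M c'.
Proof. by rewrite /lit_val => ->. Qed.

Theorem mainTheorem7 (V : finType) (Omega : Type) (D : outcomes V Omega)
  (C1 : {set V}) (B Bplus : {set literal V})
  (HBcons : consistent B)
  (HBC1 : forall L, L \in B -> L.1 \in C1)
  (HBcard : #|B| = #|C1|)
  (HBplus : Bplus \subset B)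
  (Hmono : forall L, L \in Bplus -> pos_monotonic D L) :
  (exists (T : {set {set literal V}}) (wstar : Omega) (c2 : {ffun V -> bool}),
     is_tree Bplus T /\
     0 < bZ (D (assign C1 B set0 c2) wstar)
         - \sum_(L in B) bZ (D (assign C1 B [set L] c2) wstar)
         + \sum_(E in T) bZ (D (assign C1 B E c2) wstar)) ->
  irreducible D B.
Proof.
move=> [T [w [c2 [[HTE [HTc HTconn]] HQ]]]] p A Bs [Hcons Hrep].
case: (boolP [exists i, B \subset Bs i]) => [/existsP //|/existsPn Hn].
exfalso.
pose f E := D (assign C1 B E c2) w.
have L1 : forall L E, L \in B -> lit_val L (assign C1 B E c2) = (L \notin E).
  by move=> L E HL; apply: assign_lit.
have Hmon : forall L (E : {set literal V}), L \in Bplus -> L \notin E -> (f (L |: E) <= f E)%N.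
  move=> L E HL HLE; apply: (Hmono L HL w).
  - move=> y hy; apply: assign_ext hy => M hM; rewrite in_setU1.
    suff -> : (M == L) = false by [].
    by apply/negbTE; apply: contra hM => /eqP ->.
  - by rewrite L1 // (subsetP HBplus).
  - by rewrite L1 ?(subsetP HBplus) // setU11.
have Hsing : forall L, L \in Bplus -> (f [set L] <= f set0)%N.
  by move=> L HL; have := Hmon L set0 HL (negbT (in_set0 L)); rewrite setU0.
pose U := [set L in Bplus | f [set L]].
have Hedge : forall E : {set literal V}, E \in T -> f E -> E \subset U.
  move=> E ET fE.
  have /andP [EB /cards2P [a [b [ab Eab]]]] := HTE E ET.
  rewrite Eab in fE EB *.
  have aB : a \in Bplus by apply: (subsetP EB); rewrite !inE eqxx.
  have bB : b \in Bplus by apply: (subsetP EB); rewrite !inE eqxx orbT.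
  have fb : f [set b].
    have := Hmon a [set b] aB; rewrite in_set1 ab => /(_ isT).
    by rewrite fE; case: (f _).
  have fa : f [set a].
    have := Hmon b [set a] bB; rewrite in_set1 eq_sym ab => /(_ isT).
    by rewrite setUC fE; case: (f _).
  by apply/subsetP => x; rewrite !inE => /orP [/eqP->|/eqP->]; rewrite ?aB ?bB.
have Hne : f set0 -> exists L, L \in B /\ f [set L].
  rewrite /f Hrep => /existsP [j /andP [Aj Cj]].
  have /subsetPn [L LB LBj] := Hn j.
  exists L; split => //.
  rewrite Hrep; apply/existsP; exists j; rewrite Aj /=.
  apply/forallP => M; apply/implyP => MB.
  move/forallP: Cj => /(_ M) /implyP /(_ MB) HM.
  case: (eqVneq M.1 L.1) => e.
    exfalso.
    have Lv := L1 L set0 LB; rewrite in_set0 in Lv.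
    move: M L e HM MB Lv LB LBj => [m mb] [l lb] /= e.
    subst m.
    case: mb; case: lb; rewrite /lit_val /= => HM MB Lv LB LBj.
    - by rewrite MB in LBj.
    - by rewrite HM in Lv.
    - by rewrite Lv in HM.
    - by rewrite MB in LBj.
  rewrite (@lit_val_ext _ M _ (assign C1 B set0 c2)) //.
  apply: assign_ext e => N hN; rewrite in_set1 in_set0.
  by apply/negbTE; apply: contra hN => /eqP ->.
have Hf0 : ~~ f set0 -> U = set0.
  move=> nf; apply/setP => L; rewrite !inE.
  apply/negbTE/negP => /andP [LB fL].
  by have := Hsing L LB; rewrite fL (negbTE nf).
have HQ' : 0 < bZ (f set0) - \sum_(L in B) bZ (f [set L])
   + \sum_(E in T) bZ (f E) := HQ.
rewrite !sum_bZ /bZ addrAC -PoszD subr_gt0 ltz_nat in HQ'.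
rewrite (@sumb_card _ B (fun L => f [set L])) in HQ'.
have HT : (\sum_(E in T) (f E : nat) <= #|[set E in T | E \subset U]|)%N.
  rewrite -sumb_card; apply: leq_sum => E ET.
  by case fE: (f E) => //; rewrite (Hedge E ET fE).
have Htr : (#|[set E in T | E \subset U]| <= #|U|.-1)%N.
  apply: tree_bound HTE HTc HTconn _.
  by apply/subsetP => L; rewrite inE => /andP [].
have HUS : (#|U| <= #|[set L in B | f [set L]]|)%N.
  apply: subset_leq_card; apply/subsetP => L; rewrite !inE => /andP [LB ->].
  by rewrite (subsetP HBplus).
case f0 : (f set0) in HQ'.
  have [L [LB fL]] := Hne f0.
  have : (0 < #|[set L in B | f [set L]]|)%N.
    by apply/card_gt0P; exists L; rewrite inE LB fL.
  move: HQ' HT Htr HUS.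
  move: (\sum_(E in T) (f E : nat)) #|[set E in T | E \subset U]| #|U| #|[set L in B | f [set L]]| => a b c d.
  simpl; lia.
have U0 : #|U| = 0%N by rewrite Hf0 ?cards0 // f0.
move: HQ' HT Htr U0.
move: (\sum_(E in T) (f E : nat)) #|[set E in T | E \subset U]| #|U| #|[set L in B | f [set L]]| => a b c d.
simpl; lia.
Qed.
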